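(* For all distinct positive real numbers $a$ and $b$, $$1< \frac{I(a,b)}{\sqrt{I\big(A(a,b)^2,G(a,b)^2\big)}} < \frac{2}{\sqrt{e}}.$$ Both bounds are sharp (the constants $1$ and $2/\sqrt e$ cannot be replaced by larger, respectively smaller, constants).
   Context: For positive reals $x\neq y$: arithmetic mean $A(x,y)=\frac{x+y}{2}$, geometric mean $G(x,y)=\sqrt{xy}$, and identric mean $I(x,y)=\frac{1}{e}\left(\frac{x^x}{y^y}\right)^{1/(x-y)}$. *)

(* Defs.v *)
From Stdlib Require Import Reals.
Open Scope R_scope.

Definition AM (x y : R) : R := (x + y) / 2.
Definition GM (x y : R) : R := sqrt (x * y).
Definition IM (x y : R) : R :=
  / exp 1 * Rpower (Rpower x x / Rpower y y) (/ (x - y)).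

Definition ratio (a b : R) : R :=
  IM a b / sqrt (IM (AM a b ^ 2) (GM a b ^ 2)).

(* Main.v *)
From Stdlib Require Import Reals Lra.
From Coquelicot Require Import Coquelicot.
Require Import Defs.
Open Scope R_scope.
Lemma incr (f f' : R -> R) (a b : R) : a < b ->
  (forall x, a <= x <= b -> is_derive f x (f' x)) ->
  (forall x, a < x < b -> 0 < f' x) -> f a < f b.
Proof.
intros hab hd hp.
destruct (MVT_cor2 f f' a b hab) as [c [hc1 hc2]].
{ intros c hc; apply is_derive_Reals; auto. }
assert (0 < f' c * (b - a)) by (apply Rmult_lt_0_compat; [apply hp; lra| lra]).
lra.
Qed.

Definition g x := (1+x)*ln(1+x) + (1-x)*ln(1-x).
Definition H1 x := ln(1+x) - ln(1-x) - 2*x.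
Definition h x := g x - x^2.
Definition R3 x := ln(1-x) - ln(1+x) + 2*x/(1-x^2).
Definition R2 x := -(2+x)*ln(1+x) - (2-x)*ln(1-x).
Definition Q x := g x / x^2.
Definition P1 x := 8*x^3/3 - H1 x.
Definition P x := 2*x^4/3 - h x.

Lemma H1_pos t : 0 < t < 1 -> 0 < H1 t.
Proof.
intros ht. replace 0 with (H1 0) by (unfold H1; rewrite !Rplus_0_r, !Rminus_0_r, ln_1; unfold Rdiv; ring).
apply (incr H1 (fun x => 1/(1+x) + 1/(1-x) - 2)); [lra| |].
- intros x hx. unfold H1. auto_derive; [lra|]. unfold Rminus; field; lra.
- intros x hx. replace (1/(1+x) + 1/(1-x) - 2) with (2*x^2/((1+x)*(1-x))) by (field; lra).
  apply Rdiv_lt_0_compat; [nra|nra].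
Qed.

Lemma h_pos t : 0 < t < 1 -> 0 < h t.
Proof.
intros ht. replace 0 with (h 0) by (unfold h, g; rewrite !Rplus_0_r, !Rminus_0_r, ln_1; unfold Rdiv; ring).
apply (incr h H1); [lra| |].
- intros x hx. unfold h, g, H1. auto_derive; [lra|]. unfold Rminus; field; lra.
- intros x hx. apply H1_pos; lra.
Qed.

Lemma R3_pos t : 0 < t < 1 -> 0 < R3 t.
Proof.
intros ht. replace 0 with (R3 0) by (unfold R3; rewrite !Rplus_0_r, !Rminus_0_r, ln_1; unfold Rdiv; ring).
apply (incr R3 (fun x => 4*x^2/(1-x^2)^2)); [lra| |].
- intros x hx. unfold R3. auto_derive; [repeat split; nra|]. unfold Rminus; field; nra.
- intros x hx. apply Rdiv_lt_0_compat; [nra|]. apply pow_lt; nra.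
Qed.

Lemma R2_pos t : 0 < t < 1 -> 0 < R2 t.
Proof.
intros ht. replace 0 with (R2 0) by (unfold R2; rewrite !Rplus_0_r, !Rminus_0_r, ln_1; unfold Rdiv; ring).
apply (incr R2 R3); [lra| |].
- intros x hx. unfold R2, R3. auto_derive; [lra|]. unfold Rminus; field; nra.
- intros x hx. apply R3_pos; lra.
Qed.

Lemma Q_incr x y : 0 < x -> x < y -> y < 1 -> Q x < Q y.
Proof.
intros hx hxy hy.
apply (incr Q (fun z => R2 z / z^3)); [lra| |].
- intros z hz. unfold Q, g, R2. auto_derive; [repeat split; nra|]. unfold Rminus; field; nra.
- intros z hz. apply Rdiv_lt_0_compat; [apply R2_pos; lra| apply pow_lt; lra].
Qed.

Lemma P1_pos t : 0 < t < 1/2 -> 0 < P1 t.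
Proof.
intros ht. replace 0 with (P1 0) by (unfold P1, H1; rewrite !Rplus_0_r, !Rminus_0_r, ln_1; unfold Rdiv; ring).
apply (incr P1 (fun x => 8*x^2 - 2*x^2/((1+x)*(1-x)))); [lra| |].
- intros x hx. unfold P1, H1. auto_derive; [lra|]. unfold Rminus; field; lra.
- intros x hx.
  assert (2*x^2/((1+x)*(1-x)) < 8*x^2); [|lra].
  apply Rmult_lt_reg_r with ((1+x)*(1-x)); [nra|].
  unfold Rdiv; rewrite Rmult_assoc, Rinv_l by nra. assert (x*x < 1/4) by nra. assert (0 < x*x) by nra. nra.
Qed.

Lemma P_pos t : 0 < t < 1/2 -> 0 < P t.
Proof.
intros ht. replace 0 with (P 0) by (unfold P, h, g; rewrite !Rplus_0_r, !Rminus_0_r, ln_1; unfold Rdiv; ring).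
apply (incr P P1); [lra| |].
- intros x hx. unfold P, h, g, P1, H1. auto_derive; [lra|]. unfold Rminus; field; lra.
- intros x hx. apply P1_pos; lra.
Qed.
Definition L x y := (x*ln x - y*ln y)/(x-y) - 1.

Lemma IM_exp x y : IM x y = exp (L x y).
Proof.
unfold IM, Rpower, L. replace (exp (x * ln x) / exp (y * ln y)) with (exp (x*ln x - y * ln y)) by (unfold Rminus, Rdiv; rewrite exp_plus, exp_Ropp; reflexivity). rewrite ln_exp.
rewrite <- exp_Ropp, <- exp_plus. f_equal. unfold Rdiv. ring.
Qed.

Lemma sqrt_exp z : sqrt (exp z) = exp (z/2).
Proof.
rewrite <- (sqrt_square (exp (z/2))) by (left; apply exp_pos).
f_equal. rewrite <- exp_plus. f_equal. field.
Qed.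

Lemma ratio_exp a b : 0 < a -> 0 < b ->
  ratio a b = exp (L a b - L (((a+b)/2)^2) (a*b) / 2).
Proof.
intros ha hb. unfold ratio, AM, GM. rewrite pow2_sqrt by nra.
rewrite !IM_exp, sqrt_exp. unfold Rminus at 1. rewrite exp_plus, exp_Ropp.
reflexivity.
Qed.

Lemma key a b : 0 < a -> 0 < b -> a <> b ->
  L a b - L (((a+b)/2)^2) (a*b) / 2 = h ((a-b)/(a+b)) / (2 * ((a-b)/(a+b))^2).
Proof.
intros ha hb hab.
set (A := (a+b)/2). set (t := (a-b)/(a+b)).
assert (hA : 0 < A) by (unfold A; lra).
assert (ht1 : 0 < 1 + t) by (unfold t; apply Rmult_lt_reg_r with (a+b); [lra|];
   unfold Rdiv; rewrite Rmult_plus_distr_r, Rmult_assoc, Rinv_l; lra).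
assert (ht2 : 0 < 1 - t) by (unfold t; apply Rmult_lt_reg_r with (a+b); [lra|];
   unfold Rdiv; rewrite Rmult_minus_distr_r, Rmult_assoc, Rinv_l; lra).
assert (ht0 : t <> 0) by (unfold t; intro H; apply hab;
   unfold Rdiv in H; apply Rmult_integral in H; destruct H as [H|H];
   [lra| apply Rinv_neq_0_compat in H; lra || (exfalso; revert H; apply Rinv_neq_0_compat; lra)]).
assert (Ea : a = A * (1+t)) by (unfold A, t; field; lra).
assert (Eb : b = A * (1-t)) by (unfold A, t; field; lra).
replace ((a+b)/2) with A by reflexivity.
clearbody A t. subst a b.
unfold L, h, g.
rewrite !ln_mult by nra.
replace ((A*A)) with (A^2) by ring.
simpl (A^2). rewrite Rmult_1_r, ln_mult by lra.
field. split; [exact ht0|]. split.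
- replace (A * A - A * (1 + t) * (A * (1 - t))) with ((A*t)*(A*t)) by ring. apply Rgt_not_eq. assert (A*t <> 0) by (apply Rmult_integral_contrapositive; split; lra). nra.
- intro H. apply hab. lra.
Qed.

Definition F t := h t / (2 * t^2).

Lemma F_Q t : t <> 0 -> F t = (Q t - 1)/2.
Proof. intros. unfold F, Q, h. field. auto. Qed.

Lemma F_even t : F (-t) = F t.
Proof.
unfold F, h, g. replace (1 + - t) with (1 - t) by ring. replace (1 - - t) with (1 + t) by ring.
f_equal; [ring| ring].
Qed.

Lemma ln_lb x : 0 < x -> 1 - / x <= ln x.
Proof.
intros hx. pose proof (exp_ineq1_le (ln (/ x))) as H.
rewrite exp_ln in H by (apply Rinv_0_lt_compat; lra). rewrite ln_Rinv in H by lra. lra.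
Qed.

Lemma ln2_pos : 0 < ln 2.
Proof. rewrite <- ln_1. apply ln_increasing; lra. Qed.

Lemma ln2_lt1 : ln 2 < 1.
Proof.
assert (H : ln 2 < ln (exp 1)) by (apply ln_increasing; [lra|]; pose proof (exp_ineq1 1); lra).
rewrite ln_exp in H. exact H.
Qed.

Lemma g_le s : 0 < s < 1 -> g s <= 2 * ln 2.
Proof.
intros hs. unfold g.
assert (h1 : 0 <= ln (1+s)) by (rewrite <- ln_1; left; apply ln_increasing; lra).
assert (h2 : ln (1+s) <= ln 2) by (left; apply ln_increasing; lra).
assert (h3 : ln (1-s) < 0) by (rewrite <- ln_1; apply ln_increasing; lra).
nra.
Qed.

Lemma Q_lt t : 0 < t < 1 -> Q t < 2 * ln 2.
Proof.
intros ht. set (K := 2 * ln 2). pose proof ln2_pos as hK.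
set (s0 := (1+t)/2).
set (e := Q s0 - Q t).
assert (he : 0 < e) by (unfold e; pose proof (Q_incr t s0); unfold s0 in *; lra).
set (m := Rmax s0 (K/(K+e))).
assert (hm1 : s0 <= m) by apply Rmax_l.
assert (hm2 : K/(K+e) <= m) by apply Rmax_r.
assert (hm3 : m < 1).
{ unfold m. apply Rmax_lub_lt; [unfold s0; lra|].
  apply Rmult_lt_reg_r with (K+e); [unfold K in *; lra|]. unfold Rdiv.
  rewrite Rmult_assoc, Rinv_l by (unfold K in *; lra). unfold K in *; lra. }
set (s := (1 + m)/2).
assert (hs0 : s0 < s) by (unfold s; lra).
assert (hs1 : s < 1) by (unfold s; lra).
assert (hQ : Q s0 < Q s) by (apply Q_incr; unfold s0 in *; lra).
assert (hgs : g s <= K) by (apply g_le; unfold s0 in *; lra).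
assert (hpos : 0 < K/(K+e)) by (apply Rdiv_lt_0_compat; unfold K in *; lra).
assert (h2s : K/(K+e) <= 2*s - 1) by (unfold s; lra).
assert (Qs : Q s <= K + e).
{ unfold Q.
  assert (0 < s) by (unfold s0 in *; lra).
  assert (s^2 >= 2*s - 1) by nra.
  apply Rmult_le_reg_r with (s^2); [nra|]. unfold Rdiv. rewrite Rmult_assoc, Rinv_l by nra.
  rewrite Rmult_1_r.
  assert (K <= (K+e) * (2*s-1)).
  { apply Rmult_le_compat_r with (r := K+e) in h2s; [|unfold K in *; lra].
    unfold Rdiv in h2s. rewrite Rmult_assoc, Rinv_l, Rmult_1_r in h2s by (unfold K in *; lra). lra. }
  nra. }
unfold e in *. lra.
Qed.

Lemma F_bounds t : 0 < t < 1 -> 0 < F t < ln 2 - 1/2.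
Proof.
intros ht. split.
- unfold F. apply Rdiv_lt_0_compat; [apply h_pos; auto| nra].
- rewrite F_Q by lra. pose proof (Q_lt t ht). lra.
Qed.

Lemma ratio_F a b : 0 < a -> 0 < b -> a <> b -> ratio a b = exp (F ((a-b)/(a+b))).
Proof. intros. rewrite ratio_exp, key by auto. reflexivity. Qed.

Lemma t_range a b : 0 < a -> 0 < b -> a <> b ->
  -1 < (a-b)/(a+b) < 1 /\ (a-b)/(a+b) <> 0.
Proof.
intros ha hb hab. split; [split|].
- apply Rmult_lt_reg_r with (a+b); [lra|]. unfold Rdiv; rewrite Rmult_assoc, Rinv_l; lra.
- apply Rmult_lt_reg_r with (a+b); [lra|]. unfold Rdiv; rewrite Rmult_assoc, Rinv_l; lra.
- unfold Rdiv. apply Rmult_integral_contrapositive; split; [lra|].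
  apply Rinv_neq_0_compat; lra.
Qed.

Lemma bound_val : exp (ln 2 - 1/2) = 2 / sqrt (exp 1).
Proof.
rewrite sqrt_exp. unfold Rminus. rewrite exp_plus, exp_Ropp, exp_ln by lra.
replace (1/2) with (1/2) by reflexivity. reflexivity.
Qed.

Lemma part1 a b : 0 < a -> 0 < b -> a <> b ->
     1 < ratio a b /\ ratio a b < 2 / sqrt (exp 1).
Proof.
intros ha hb hab. rewrite ratio_F by auto.
destruct (t_range a b ha hb hab) as [[h1 h2] h3].
set (t := (a-b)/(a+b)) in *.
assert (hF : 0 < F t < ln 2 - 1/2).
{ destruct (Rlt_or_le 0 t).
  - apply F_bounds; lra.
  - rewrite <- F_even. apply F_bounds. assert (t <> 0) by auto. lra. }
split.
- rewrite <- exp_0. apply exp_increasing; lra.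
- rewrite <- bound_val. apply exp_increasing; lra.
Qed.

Theorem theorem1 :
  (forall a b : R, 0 < a -> 0 < b -> a <> b ->
     1 < ratio a b /\ ratio a b < 2 / sqrt (exp 1))
  /\ (forall c : R, 1 < c ->
        exists a b : R, 0 < a /\ 0 < b /\ a <> b /\ ratio a b < c)
  /\ (forall d : R, d < 2 / sqrt (exp 1) ->
        exists a b : R, 0 < a /\ 0 < b /\ a <> b /\ d < ratio a b).
Proof.
split; [exact part1|]. split.
- intros c hc.
  assert (hlc : 0 < ln c) by (rewrite <- ln_1; apply ln_increasing; lra).
  set (t := Rmin (1/4) (ln c / 2)).
  assert (ht1 : t <= 1/4) by apply Rmin_l.
  assert (ht2 : t <= ln c / 2) by apply Rmin_r.
  assert (ht0 : 0 < t) by (apply Rmin_glb_lt; lra).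
  exists (1+t), (1-t). split; [lra|]. split; [lra|]. split; [lra|].
  rewrite ratio_F by lra.
  replace ((1+t - (1-t))/(1+t+(1-t))) with t by (field; lra).
  pose proof (P_pos t ltac:(lra)) as hP. unfold P in hP.
  assert (F t < t^2/3).
  { unfold F. apply Rmult_lt_reg_r with (2*t^2); [nra|]. unfold Rdiv.
    rewrite Rmult_assoc, Rinv_l by nra. nra. }
  rewrite <- (exp_ln c) by lra. apply exp_increasing. nra.
- intros d hd.
  destruct (Rle_or_lt d 1) as [hd1|hd1].
  { exists 2, 1. split; [lra|]. split; [lra|]. split; [lra|].
    destruct (part1 2 1) as [H _]; lra. }
  rewrite <- bound_val in hd.
  assert (hld : ln d < ln 2 - 1/2) by (rewrite <- (ln_exp (ln 2 - 1/2)); apply ln_increasing; lra).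
  set (K := 2 * ln 2). set (e := K - 1 - 2 * ln d).
  assert (he : 0 < e) by (unfold e, K; lra).
  set (s := Rmin (1/2) (e/8)).
  assert (hs1 : s <= 1/2) by apply Rmin_l.
  assert (hs2 : s <= e/8) by apply Rmin_r.
  assert (hs0 : 0 < s) by (apply Rmin_glb_lt; lra).
  set (t := 1 - s^2).
  assert (ht : 0 < t < 1) by (unfold t; nra).
  exists (1+t), (1-t). split; [lra|]. split; [lra|]. split; [lra|].
  rewrite ratio_F by lra.
  replace ((1+t - (1-t))/(1+t+(1-t))) with t by (field; lra).
  assert (hg : K - 2*s <= g t).
  { unfold g, t. replace (1 + (1 - s^2)) with (2 * (1 - s^2/2)) by field.
    replace (1 - (1 - s^2)) with (s * s) by ring.
    rewrite !ln_mult by nra.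
    pose proof (ln_lb (1 - s^2/2) ltac:(nra)) as l1.
    pose proof (ln_lb s hs0) as l2.
    assert (q1 : -(s^2) <= (2 - s^2) * ln (1 - s^2/2)).
    { apply Rle_trans with ((2 - s^2) * (1 - / (1 - s^2/2))).
      - right. field. nra.
      - apply Rmult_le_compat_l; nra. }
    assert (q2 : s - 1 <= s * ln s).
    { apply Rle_trans with (s * (1 - / s)).
      - right. field. lra.
      - apply Rmult_le_compat_l; lra. }
    pose proof ln2_lt1. pose proof ln2_pos.
    unfold K. nra. }
  assert (hgp : 0 < g t) by (pose proof (h_pos t ht); unfold h in *; nra).
  assert (hQ : g t <= Q t).
  { unfold Q. apply Rmult_le_reg_r with (t^2); [nra|]. unfold Rdiv.
    rewrite Rmult_assoc, Rinv_l by nra. assert (t^2 <= 1) by nra. nra. }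
  rewrite F_Q by lra.
  rewrite <- (exp_ln d) by lra. apply exp_increasing. unfold e in *. lra.
Qed.
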